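(* Let $S$ be a memory system satisfying the Causality and Data Independence assumptions, let $n,m\ge1$, let $\Omega$ be the simple witness for $S(n,m)$, and let $1\le k\le\min\{n,m\}$. Then there is an unambiguous trace $\tau$ of $S(n,m)$ such that $G(\Omega)(\tau)$ has a canonical $k$-nice cycle if and only if there is a trace $\tau'$ of $S(n,m,2)$ such that $\tau'\in Constrain_k(j)$ for all $1\le j\le m$ and $\tau'\in Check_k(i)$ for all $1\le i\le k$.
   Context: Notation: $\mathbb{N}_n=\{1,\dots,n\}$, $\mathbb{W}_n=\{0,\dots,n\}$, $\mathbb{W}=\{0,1,2,\dots\}$. Memory events $E(n,m,v)=\{R,W\}\times\mathbb{N}_n\times\mathbb{N}_m\times\mathbb{W}_v$; for $e=\langle a,b,c,d\rangle$, $op(e)=a$, $proc(e)=b$, $loc(e)=c$, $data(e)=d$; $0$ models the initial value of every location. A memory system is a family $S=(S(n,m,v))_{n,m,v\ge1}$, $S(n,m,v)$ a regular set of finite runs over an alphabet $E^a(n,m,v)\supseteq E(n,m,v)$ (other letters are internal events); $S(n,m)=\bigcup_{v\ge1}S(n,m,v)$. The trace of a run is its subsequence of memory events; traces of $S(n,m,v)$ (resp. $S(n,m)$) are traces of its runs. For a sequence $\tau$ of memory events with positions $1,\dots,|\tau|$: $P(\tau,i)=\{k: proc(\tau(k))=i\}$, $L(\tau,j)=\{k: loc(\tau(k))=j\}$, $L^w(\tau,j)$, $L^r(\tau,j)$ the write/read positions in $L(\tau,j)$, $M(\tau,i)=\{\langle u,v\rangle: u,v\in P(\tau,i), u<v\}$.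 $\tau$ is unambiguous if for every $j$ and $x\in L^w(\tau,j)$, $data(\tau(x))\ne0$ and $data(\tau(x))\ne data(\tau(y))$ for all $y\in L^w(\tau,j)\setminus\{x\}$. Causality: for all $n,m,v$, every trace $\tau$ of $S(n,m,v)$, every $j$ and $x\in L^r(\tau,j)$, either $data(\tau(x))=0$ or some $y\in L^w(\tau,j)$ has $data(\tau(y))=data(\tau(x))$. Data Independence: with renaming functions $\lambda:\mathbb{N}_m\times\mathbb{W}\to\mathbb{W}$, $\lambda(j,0)=0$, and $\lambda^d(\langle a,b,c,d\rangle)=\langle a,b,c,\lambda(c,d)\rangle$ letterwise, for all $n,m,v$ and $\tau\in E(n,m,v)^*$: $\tau$ is a trace of $S(n,m,v)$ iff $\tau=\lambda^d(\tau')$ for some unambiguous trace $\tau'$ of $S(n,m)$ and renaming function $\lambda$ with values in $\mathbb{W}_v$. The simple witness $\Omega$ assigns to each trace $\tau$ and location $j$ the order $\Omega(\tau,j)=\{\langle x,y\rangle: x,y\in L^w(\tau,j), x<y\}$. For unambiguous $\tau$: $\langle x,y\rangle\in\Omega^e(\tau,j)$ (for $x,y\in L(\tau,j)$) iff (1) $data(\tau(x))=data(\tau(y))$, $op(\tau(x))=W$, $op(\tau(y))=R$; or (2) $data(\tau(x))=0\ne data(\tau(y))$; or (3) some $a,b\in L^w(\tau,j)$ have $\langle a,b\rangle\in\Omega(\tau,j)$, $data(\tau(a))=data(\tau(x))$, $data(\tau(b))=data(\tau(y))$. $G(\Omega)(\tau)$ is the directed graph on $\{1,\dots,|\tau|\}$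 with edges $\bigcup_iM(\tau,i)\cup\bigcup_j\Omega^e(\tau,j)$. With $x\oplus1=x+1$ for $x<k$ and $k\oplus1=1$, a canonical $k$-nice cycle in $G(\Omega)(\tau)$ is a sequence $u_1,v_1,\dots,u_k,v_k$ of pairwise distinct vertices with $\langle u_x,v_x\rangle\in M(\tau,x)$ and $\langle v_x,u_{x\oplus1}\rangle\in\Omega^e(\tau,x\oplus1)$ for all $1\le x\le k$. Languages over $E(n,m,2)$: for $1\le j\le k$, $Constrain_k(j)$ is the set of sequences whose subsequence of write events to location $j$ (events $e$ with $op(e)=W$, $loc(e)=j$) has data-value sequence in $0^*\cup 0^*1\,2^*$ (i.e. it is accepted by the automaton with states $a$ (initial) and $b$, both accepting, that ignores all other events, loops on $a$ for data $0$, goes $a\to b$ on data $1$, loops on $b$ for data $2$, and has no other transitions). For $k<j\le m$, $Constrain_k(j)$ is the set of sequences in which every write event to location $j$ has data value $0$. For $1\le i\le k$, $Check_k(i)$ is the set of sequences $\tau$ over $E(n,m,2)$ having positions $x<y$ such that $proc(\tau(x))=i$, $loc(\tau(x))=i$, $data(\tau(x))\in\{1,2\}$, and $proc(\tau(y))=i$, $loc(\tau(y))=i\oplus1$, and either $data(\tau(y))=0$ or ($op(\tau(y))=W$ and $data(\tau(y))=1$). *)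

(* Defs.v *)
From mathcomp Require Import all_boot.
Set Implicit Arguments. Unset Strict Implicit. Unset Printing Implicit Defensive.

Inductive opk := Rd | Wr.
Definition isW (o : opk) : bool := if o is Wr then true else false.

Record event := Ev { op : opk; proc : nat; loc : nat; data : nat }.
Definition ev0 := Ev Rd 0 0 0.

Definition inE (n m v : nat) (e : event) : bool :=
  [&& 1 <= proc e <= n, 1 <= loc e <= m & data e <= v].

Definition regular_on (A : Type) (alph : pred A) (L : seq A -> Prop) : Prop :=
  exists (Q : finType) (q0 : Q) (delta : Q -> A -> Q) (F : pred Q),
    forall r, L r <-> (all alph r /\ F (foldl delta q0 r)).

(* letters of E^a(n,m,v) = E(n,m,v) + internal events (a finite type) *)
Definition letter_ok (n m v : nat) (I : Type) (l : event + I) : bool :=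
  match l with inl e => inE n m v e | inr _ => true end.

Record memsys := MemSys {
  ialph : nat -> nat -> nat -> finType;
  runs : forall n m v, seq (event + ialph n m v) -> Prop;
  runs_regular : forall n m v, 1 <= n -> 1 <= m -> 1 <= v ->
    regular_on (@letter_ok n m v (ialph n m v)) (@runs n m v)
}.

Definition trace (I : Type) (r : seq (event + I)) : seq event :=
  pmap (fun l => match l with inl e => Some e | inr _ => None end) r.

Definition is_trace (S : memsys) (n m v : nat) (tau : seq event) : Prop :=
  exists r, @runs S n m v r /\ trace r = tau.

Definition is_trace_nm (S : memsys) (n m : nat) (tau : seq event) : Prop :=
  exists v, 1 <= v /\ is_trace S n m v tau.

(* ---------- positions (0-based: x < size tau) ---------- *)
Definition at_ (tau : seq event) (x : nat) : event := nth ev0 tau x.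

Definition inP (tau : seq event) (i x : nat) : Prop :=
  x < size tau /\ proc (at_ tau x) = i.
Definition inL (tau : seq event) (j x : nat) : Prop :=
  x < size tau /\ loc (at_ tau x) = j.
Definition inLw (tau : seq event) (j x : nat) : Prop :=
  inL tau j x /\ op (at_ tau x) = Wr.
Definition inLr (tau : seq event) (j x : nat) : Prop :=
  inL tau j x /\ op (at_ tau x) = Rd.
Definition Mrel (tau : seq event) (i u v : nat) : Prop :=
  inP tau i u /\ inP tau i v /\ u < v.

Definition unambiguous (tau : seq event) : Prop :=
  forall j x, inLw tau j x ->
    data (at_ tau x) <> 0 /\
    (forall y, inLw tau j y -> y <> x -> data (at_ tau x) <> data (at_ tau y)).

Definition causality (S : memsys) : Prop :=
  forall n m v, 1 <= n -> 1 <= m -> 1 <= v ->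
  forall tau, is_trace S n m v tau ->
  forall j x, inLr tau j x ->
    data (at_ tau x) = 0 \/
    exists y, inLw tau j y /\ data (at_ tau y) = data (at_ tau x).

Definition rename (lam : nat -> nat -> nat) (e : event) : event :=
  Ev (op e) (proc e) (loc e) (lam (loc e) (data e)).

Definition data_independence (S : memsys) : Prop :=
  forall n m v, 1 <= n -> 1 <= m -> 1 <= v ->
  forall tau, all (inE n m v) tau ->
    (is_trace S n m v tau <->
     exists (tau' : seq event) (lam : nat -> nat -> nat),
       unambiguous tau' /\ is_trace_nm S n m tau' /\
       (forall j, lam j 0 = 0) /\ (forall j d, lam j d <= v) /\
       tau = map (rename lam) tau').

Definition Omega (tau : seq event) (j x y : nat) : Prop :=
  inLw tau j x /\ inLw tau j y /\ x < y.

Definition OmegaE (tau : seq event) (j x y : nat) : Prop :=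
  inL tau j x /\ inL tau j y /\
  let dx := data (at_ tau x) in let dy := data (at_ tau y) in
  [\/ (dx = dy /\ op (at_ tau x) = Wr /\ op (at_ tau y) = Rd),
      (dx = 0 /\ dy <> 0)
    | exists a b, Omega tau j a b /\ data (at_ tau a) = dx /\ data (at_ tau b) = dy].

Definition succk (k x : nat) : nat := if x < k then x.+1 else 1.

Definition has_canonical_nice_cycle (k : nat) (tau : seq event) : Prop :=
  exists u v : nat -> nat,
    (forall x y, 1 <= x <= k -> 1 <= y <= k ->
       u x <> v y /\ (x <> y -> u x <> u y /\ v x <> v y)) /\
    (forall x, 1 <= x <= k ->
       Mrel tau x (u x) (v x) /\ OmegaE tau (succk k x) (v x) (u (succk k x))).

Definition write_data (j : nat) (tau : seq event) : seq nat :=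
  [seq data e | e <- tau & isW (op e) && (loc e == j)].

Definition Constrain (k j : nat) (tau : seq event) : Prop :=
  if j <= k then
    exists a b, write_data j tau = nseq a 0 \/
                write_data j tau = nseq a 0 ++ 1 :: nseq b 2
  else all (fun d => d == 0) (write_data j tau).

Definition Check (k i : nat) (tau : seq event) : Prop :=
  exists x y, x < y /\ y < size tau /\
    proc (at_ tau x) = i /\ loc (at_ tau x) = i /\
    (data (at_ tau x) = 1 \/ data (at_ tau x) = 2) /\
    proc (at_ tau y) = i /\ loc (at_ tau y) = succk k i /\
    (data (at_ tau y) = 0 \/ (op (at_ tau y) = Wr /\ data (at_ tau y) = 1)).

(* Main.v *)
Require Import Defs.
From mathcomp Require Import all_boot zify.
From Stdlib Require Import IndefiniteDescription.
From HB Require Import structures.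
Set Implicit Arguments. Unset Strict Implicit.

Definition enc (e : event) := (isW (op e), proc e, loc e, data e).
Definition dec (x : bool * nat * nat * nat) :=
  let: (b, p, l, d) := x in Ev (if b then Wr else Rd) p l d.
Lemma encK : cancel enc dec. Proof. by case=> [[]]. Qed.
HB.instance Definition _ := Equality.copy event (can_type encK).

Lemma choice2 (k : nat) (Q : nat -> nat -> nat -> Prop) :
  (forall i, 1 <= i <= k -> exists x y, Q i x y) ->
  exists u v : nat -> nat, forall i, 1 <= i <= k -> Q i (u i) (v i).
Proof.
move=> X.
have H : forall i, exists p : nat * nat, 1 <= i <= k -> Q i p.1 p.2.
  move=> i; case: (boolP (1 <= i <= k)) => hi.
    by have [x [y q]] := X i hi; exists (x, y).
  by exists (0, 0).
pose f i := proj1_sig (constructive_indefinite_description _ (H i)).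
exists (fun i => (f i).1), (fun i => (f i).2) => i hi.
exact: (proj2_sig (constructive_indefinite_description _ (H i)) hi).
Qed.

Lemma trace_inE (S : memsys) (n m v : nat) (t : seq event) : 1 <= n -> 1 <= m -> 1 <= v ->
  is_trace S n m v t -> all (Defs.inE n m v) t.
Proof.
move=> hn hm hv [r [hr <-]].
have [Q [q0 [delta [F hreg]]]] := runs_regular S hn hm hv.
have [hall _] := (hreg r).1 hr.
elim: r hall {hr} => //= [[e|i] r IH] /andP[h1 h2] /=.
  by move: h1 => /= ->; rewrite IH.
exact: IH.
Qed.

Definition Rr (a b : nat) : bool := (a < b) || ((a == b) && (a != 1)).

Lemma Rr_trans : transitive Rr.
Proof. move=> b a c; rewrite /Rr; lia. Qed.

Lemma sub2 (s : seq event) p q : p < q -> q < size s ->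
  subseq [:: nth ev0 s p; nth ev0 s q] s.
Proof.
elim: s p q => [|e s IH] p q //= hpq hq.
case: p hpq => [|p] hpq.
  case: q hpq hq => [|q] //= _ hq.
  rewrite eqxx sub1seq; apply: mem_nth; done.
case: q hpq hq => [|q] // hpq hq.
exact: (subseq_trans (IH p q hpq hq) (subseq_cons s e)).
Qed.

Definition Pw (j : nat) := fun e : event => isW (op e) && (loc e == j).

Lemma wdE j t : write_data j t = map data (filter (Pw j) t).
Proof. by []. Qed.

Lemma Rpos t j p q : sorted Rr (write_data j t) -> p < q -> q < size t ->
  inLw t j p -> inLw t j q -> Rr (data (at_ t p)) (data (at_ t q)).
Proof.
move=> hs hpq hq [[_ hlp] hwp] [[_ hlq] hwq].
have h : subseq [:: at_ t p; at_ t q] (filter (Pw j) t).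
  rewrite subseq_filter /= /Pw hlp hlq hwp hwq eqxx /=; exact: sub2.
have := subseq_sorted Rr_trans (map_subseq data h) hs.
by rewrite /= andbT.
Qed.

Lemma wd_one t j p q : sorted Rr (write_data j t) -> inLw t j p -> inLw t j q ->
  data (at_ t p) = 1 -> data (at_ t q) = 1 -> p = q.
Proof.
move=> hs hp hq dp dq.
have sp := hp.1.1; have sq := hq.1.1.
case: (ltngtP p q) => // h.
  by have := Rpos hs h sq hp hq; rewrite dp dq.
by have := Rpos hs h sp hq hp; rewrite dp dq.
Qed.

Lemma wd_lt t j p q : sorted Rr (write_data j t) -> inLw t j p -> inLw t j q ->
  data (at_ t p) < data (at_ t q) -> p < q.
Proof.
move=> hs hp hq dpq.
have sp := hp.1.1; have sq := hq.1.1.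
case: (ltngtP p q) => // h.
  have := Rpos hs h sp hq hp; rewrite /Rr; lia.
by move: dpq; rewrite h ltnn.
Qed.

Lemma shape_sorted a b : sorted Rr (nseq a 0) /\ sorted Rr (nseq a 0 ++ 1 :: nseq b 2).
Proof.
have h2 : forall b, path Rr 2 (nseq b 2) by elim=> //= b' ->.
have h1 : path Rr 1 (nseq b 2) by case: b => //=.
have h0 : forall a, path Rr 0 (nseq a 0) /\ path Rr 0 (nseq a 0 ++ 1 :: nseq b 2).
  by elim=> [|a' [IH1 IH2]] //=; rewrite IH1 IH2.
by case: a => //= a; have [-> ->] := h0 a.
Qed.

Definition fpred (j d : nat) := fun e : event => isW (op e) && (loc e == j) && (data e == d).

Definition lamf (k : nat) (t : seq event) (w : nat -> nat) (j d : nat) : nat :=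
  if (j <= k) && (d != 0) then
    let p := find (fpred j d) t in
    if p < w j then 0 else if p == w j then 1 else 2
  else 0.

Lemma lamf_le2 k t w j d : lamf k t w j d <= 2.
Proof. rewrite /lamf; case: ifP => // _; case: ifP => // _; case: ifP => //. Qed.

Lemma lamf0 k t w j : lamf k t w j 0 = 0.
Proof. by rewrite /lamf andbF. Qed.

Lemma findW t j p : unambiguous t -> inLw t j p ->
  find (fpred j (data (at_ t p))) t = p.
Proof.
move=> hU hp.
have [[sp lp] wp] := hp.
have hP : fpred j (data (at_ t p)) (nth ev0 t p).
  by rewrite /fpred /at_ in lp wp *; rewrite lp wp !eqxx.
have hle : find (fpred j (data (at_ t p))) t <= p.
  rewrite leqNgt; apply/negP => /(before_find ev0); by rewrite hP.
have hhas : has (fpred j (data (at_ t p))) t.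
  by apply/hasP; exists (nth ev0 t p) => //; apply: mem_nth.
have := nth_find ev0 hhas.
set f := find _ _ => hf.
case: (f =P p) => // hne.
have hsf : f < size t by rewrite -has_find.
move: hf; rewrite /fpred => /andP[/andP[hw hl] /eqP hd].
have hwf : inLw t j f.
  split; [split => //; exact/eqP|]; by move: hw; rewrite /at_; case: (op _).
by case: ((hU j p hp).2 f hwf hne); rewrite /at_ hd.
Qed.

Lemma lam_at k t w j p : unambiguous t -> inLw t j p -> j <= k ->
  lamf k t w j (data (at_ t p)) = if p < w j then 0 else if p == w j then 1 else 2.
Proof.
move=> hU hp hjk.
have hd0 := (hU j p hp).1.
rewrite /lamf hjk /=.
have -> : data (at_ t p) != 0 by apply/eqP.
by rewrite /= findW.
Qed.

Lemma at_map lam t x : x < size t ->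
  at_ (map (rename lam) t) x = rename lam (at_ t x).
Proof. by move=> hx; rewrite /at_ (nth_map ev0). Qed.

Lemma wd_rename lam j t :
  write_data j (map (rename lam) t) = map (fun e => lam j (data e)) (filter (Pw j) t).
Proof.
rewrite wdE filter_map -map_comp.
have -> : [seq x <- t | preim (rename lam) (Pw j) x] = filter (Pw j) t by [].
apply/eq_in_map => e; rewrite mem_filter /Pw /= => /andP[/andP[_ /eqP ->] _].
by [].
Qed.

Lemma wd_shape k t w j : unambiguous t -> j <= k -> inLw t j (w j) ->
  exists a b, write_data j (map (rename (lamf k t w)) t) = nseq a 0 ++ 1 :: nseq b 2.
Proof.
move=> hU hjk hw.
have hwN : w j < size t := hw.1.1.
rewrite wd_rename.
have -> : filter (Pw j) t = filter (Pw j) (mkseq (nth ev0 t) (size t)) by rewrite mkseq_nth.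
rewrite /mkseq filter_map -map_comp.
have Hi : iota 0 (size t) = iota 0 (w j) ++ w j :: iota (w j).+1 (size t - (w j).+1).
  rewrite -{1}(subnKC (ltnW hwN)) iotaD add0n subnS.
  by case E: (size t - w j) => [|r] /=; [lia|].
set Q := preim _ _.
have HQ : forall i, i < size t -> Q i -> inLw t j i.
  move=> i hi; rewrite /Q /Pw /= => /andP[hW /eqP hl].
  split; [by split|]; by move: hW; rewrite /at_; case: (op _).
rewrite Hi filter_cat map_cat /=.
have -> : Pw j (nth ev0 t (w j)) by rewrite /Q /Pw /=; move: hw => [[_ ->] ->]; rewrite eqxx.
rewrite /=.
set l1 := map _ (filter _ (iota 0 (w j))).
set l2 := map _ (filter _ (iota (w j).+1 _)).
exists (size l1), (size l2).
have e1 : all (pred1 0) l1.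
  apply/allP => x /mapP [i]; rewrite mem_filter mem_iota => /andP[hq hi] -> /=.
  rewrite (lam_at w hU (HQ i _ hq)) //; last by lia.
  by rewrite (_ : i < w j) //; lia.
have e2 : all (pred1 2) l2.
  apply/allP => x /mapP [i]; rewrite mem_filter mem_iota => /andP[hq hi] -> /=.
  rewrite (lam_at w hU (HQ i _ hq)) //; last by lia.
  have h1 : (i < w j) = false by lia.
  have h2 : (i == w j) = false by lia.
  by rewrite h1 h2.
rewrite -(all_pred1P _ _ e1) -(all_pred1P _ _ e2) /=.
by rewrite (lam_at w hU hw hjk) ltnn eqxx.
Qed.

Definition predk (k j : nat) := if j == 1 then k else j.-1.

Lemma succk_range k i : 1 <= i <= k -> 1 <= succk k i <= k.
Proof. rewrite /succk; case: ifP; lia. Qed.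
Lemma predk_range k i : 1 <= i <= k -> 1 <= predk k i <= k.
Proof. rewrite /predk; case: eqP; lia. Qed.
Lemma succk_predk k j : 1 <= j <= k -> succk k (predk k j) = j.
Proof. rewrite /predk /succk; case: (j =P 1) => ?; case: ifP; lia. Qed.
Lemma predk_succk k i : 1 <= i <= k -> predk k (succk k i) = i.
Proof. move=> hi; rewrite /succk; case: (ltnP i k) => h; rewrite /predk /=; [case: (i.+1 =P 1) => e |]; lia. Qed.

Definition CB (k i : nat) (tau : seq event) (x y : nat) : Prop :=
  x < y /\ y < size tau /\
    proc (at_ tau x) = i /\ loc (at_ tau x) = i /\
    (data (at_ tau x) = 1 \/ data (at_ tau x) = 2) /\
    proc (at_ tau y) = i /\ loc (at_ tau y) = succk k i /\
    (data (at_ tau y) = 0 \/ (op (at_ tau y) = Wr /\ data (at_ tau y) = 1)).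

Lemma inLw_map lam t j p : inLw t j p -> inLw (map (rename lam) t) j p.
Proof.
move=> [[hs hl] hw]; rewrite /inLw /inL size_map at_map //.
Qed.

Lemma inLw_unmap lam t j p : inLw (map (rename lam) t) j p -> inLw t j p.
Proof.
move=> [[hs hl] hw]; rewrite size_map in hs; move: hl hw; rewrite at_map //.
Qed.

Lemma forward (S : memsys) (hC : causality S) (hDI : data_independence S)
  (n m : nat) (hn : 1 <= n) (hm : 1 <= m) (k : nat) (hk : 1 <= k <= minn n m)
  (tau : seq event) :
  unambiguous tau -> is_trace_nm S n m tau -> has_canonical_nice_cycle k tau ->
  (exists tau', is_trace S n m 2 tau' /\
                (forall j, 1 <= j <= m -> Constrain k j tau') /\
                (forall i, 1 <= i <= k -> Check k i tau')).
Proof.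
move=> hU [v0 [hv0 htr]] [u [v [hdist hcyc]]].
have hinE := trace_inE hn hm hv0 htr.
pose PW x w := inLw tau (succk k x) w /\
   data (at_ tau (u (succk k x))) = data (at_ tau w) /\
   (data (at_ tau (v x)) = 0 \/
    (exists a, inLw tau (succk k x) a /\ a < w /\ data (at_ tau a) = data (at_ tau (v x))) \/
    v x = w).
have [W [_ hW]] : exists W W' : nat -> nat, forall x, 1 <= x <= k -> PW x (W x) /\ True.
  apply: (choice2 (Q := fun x a _ => PW x a /\ True)) => x hx.
  have [_ [hLv [hLu hcase]]] := hcyc x hx.
  case: hcase.
  - move=> [hd [hWv hRu]]; exists (v x), 0; split => //; split; first by split.
    by split; [rewrite hd | right; right].
  - move=> [hd0 hdu].
    case hop: (op (at_ tau (u (succk k x)))).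
      have [//|[y [hy hdy]]] := hC n m v0 hn hm hv0 tau htr _ _ (conj hLu hop).
      by exists y, 0; split => //; split => //; split; [rewrite hdy | left].
    by exists (u (succk k x)), 0; split => //; split; [split | split; [|left]].
  - move=> [a [b [[hwa [hwb hab]] [hda hdb]]]].
    exists b, 0; split => //; split => //; split; first by rewrite hdb.
    by right; left; exists a.
pose w j := W (predk k j).
pose lam := lamf k tau w.
have hk1 : 1 <= k by case/andP: hk.
have hkm : k <= m by move: hk; rewrite leq_min => /andP[_ /andP[]].
have hwj : forall j, 1 <= j <= k -> inLw tau j (w j) /\
     data (at_ tau (u j)) = data (at_ tau (w j)).
  move=> j hj; have [[h1 [h2 _]] _] := hW _ (predk_range hj).
  rewrite succk_predk // in h1 h2; by rewrite /w; split.
exists (map (rename lam) tau); split; last split.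
- have hall : all (Defs.inE n m 2) (map (rename lam) tau).
    rewrite all_map; apply: sub_all hinE => e; rewrite /Defs.inE /= => /and3P[-> -> _].
    by rewrite lamf_le2.
  apply/(hDI n m 2 hn hm isT _ hall); exists tau, lam.
  split => //; split; first by exists v0.
  by split; [move=> j; apply: lamf0 | split => // j d; apply: lamf_le2].
- move=> j /andP[hj1 hjm]; rewrite /Constrain; case: ifP => hjk.
    have hjj : 1 <= j <= k by rewrite hj1 hjk.
    have [a [b ->]] := wd_shape hU hjk (hwj j hjj).1.
    by exists a, b; right.
  rewrite wd_rename all_map; apply/allP => e _ /=.
  by rewrite /lam /lamf hjk.
- move=> i hi; exists (u i), (v i).
  have [[[hsu hpu] [[hsv hpv] hlt]] hO] := hcyc i hi.
  have [hLv _] := hO.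
  have [_ [hLu _]] := (hcyc _ (predk_range hi)).2.
  rewrite succk_predk // in hLu.
  rewrite size_map !at_map //=.
  split => //; split => //; split => //; split; first exact: hLu.2.
  split.
    have [hw1 hw2] := hwj i hi; rewrite hLu.2 hw2 /lam (lam_at w hU hw1) ?ltnn ?eqxx; last by case/andP: hi.
    by left.
  split => //; split; first exact: hLv.2.
  rewrite hLv.2.
  have [[hw1 [_ hw3]] _] := hW i hi.
  have hwi : w (succk k i) = W i by rewrite /w predk_succk.
  have hsk := succk_range hi.
  case: hw3 => [->|[[a [ha [hab hda]]]| hvw]].
  + by left; rewrite /lam lamf0.
  + left; rewrite -hda /lam (lam_at w hU ha) ?hwi ?hab //; by case/andP: hsk.
  + have hwv : inLw tau (succk k i) (v i) by rewrite hvw.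
    right; split; first exact: hwv.2.
    by rewrite /lam (lam_at w hU hwv) ?hwi ?hvw ?ltnn ?eqxx //; case/andP: hsk.
Qed.

Lemma backward (S : memsys) (hC : causality S) (hDI : data_independence S)
  (n m : nat) (hn : 1 <= n) (hm : 1 <= m) (k : nat) (hk : 1 <= k <= minn n m)
  (tau' : seq event) :
  is_trace S n m 2 tau' ->
  (forall j, 1 <= j <= m -> Constrain k j tau') ->
  (forall i, 1 <= i <= k -> Check k i tau') ->
  exists tau, unambiguous tau /\ is_trace_nm S n m tau /\
               has_canonical_nice_cycle k tau.
Proof.
move=> htr' hCon hChk.
have hall' := trace_inE hn hm (isT : 1 <= 2) htr'.
have [tau [lam [hU [[v1 [hv1 htr]] [hl0 [hl2 heq]]]]]] :=
  (hDI n m 2 hn hm isT tau' hall').1 htr'.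
have [u [v huv]] := choice2 (Q := fun i x y => CB k i tau' x y) hChk.
subst tau'.
have hkm : k <= m by move: hk; rewrite leq_min => /andP[_ /andP[]].
set t' := map (rename lam) tau in hCon huv.
have hCBt : forall i, 1 <= i <= k ->
  u i < v i /\ v i < size tau /\ proc (at_ tau (u i)) = i /\ loc (at_ tau (u i)) = i /\
  (lam i (data (at_ tau (u i))) = 1 \/ lam i (data (at_ tau (u i))) = 2) /\
  proc (at_ tau (v i)) = i /\ loc (at_ tau (v i)) = succk k i /\
  (lam (succk k i) (data (at_ tau (v i))) = 0 \/
     (op (at_ tau (v i)) = Wr /\ lam (succk k i) (data (at_ tau (v i))) = 1)).
  move=> i hi; have := huv i hi; rewrite /CB /t' size_map.
  move=> [hlt [hs]]; have hsu : u i < size tau by apply: ltn_trans hs.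
  rewrite !at_map //= => [[-> [hlu [hdu [-> [hlv hdv]]]]]].
  by rewrite hlu in hdu; rewrite hlv in hdv; do !split.
have hdist : forall x y, 1 <= x <= k -> 1 <= y <= k ->
    u x <> v y /\ (x <> y -> u x <> u y /\ v x <> v y).
  move=> x y hx hy.
  have [hlx [_ [hpux [_ [_ [hpvx _]]]]]] := hCBt x hx.
  have [hly [_ [hpuy [_ [_ [hpvy _]]]]]] := hCBt y hy.
  split.
    move=> e; have exy : x = y by rewrite -hpux e hpvy.
    by subst y; move: hlx; rewrite e ltnn.
  move=> hne; split => e; apply: hne.
    by rewrite -hpux e hpuy.
  by rewrite -hpvx e hpvy.
exists tau; split => //; split; first by exists v1.
exists u, v; split => //.
move=> x hx.
have [hlx [hsx [hpux [hlux [hdux [hpvx [hlvx hdvx]]]]]]] := hCBt x hx.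
have hsux : u x < size tau by apply: ltn_trans hsx.
split; first by split; [split|split; [split|]].
set j := succk k x.
have hj := succk_range hx.
have [hlj [hsj [hpuj [hluj [hduj _]]]]] := hCBt j hj.
have hsuj : u j < size tau by apply: ltn_trans hsj.
have hjk : j <= k by case/andP: hj.
have hjm : j <= m by apply: leq_trans hkm.
have hsort : sorted Rr (write_data j t').
  have hjj : 1 <= j <= m by rewrite hjm andbT; case/andP: hj.
  have := hCon j hjj.
  rewrite /Constrain hjk => [[a [b [->|->]]]]; by have [] := shape_sorted a b.
have hLv : inL tau j (v x) by [].
have hLu : inL tau j (u j) by [].
split => //; split => //.
rewrite /=.
set d := data (at_ tau (v x)); set e := data (at_ tau (u j)).
have he0 : e <> 0 by move=> he; move: hduj; rewrite -/e he hl0; case.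
have [b [hb hdb]] : exists b, inLw tau j b /\ data (at_ tau b) = e.
  case hop: (op (at_ tau (u j))); last by exists (u j).
  by have [//|] := hC n m v1 hn hm hv1 tau htr _ _ (conj hLu hop).
have hdbt : data (at_ t' b) = lam j e.
  by rewrite /t' at_map ?hb.1.1 //= hb.1.2 hdb.
case: (d =P 0) => hd0; first by apply: Or32.
have hdv : lam j d = 0 \/ op (at_ tau (v x)) = Wr /\ lam j d = 1 by [].
case: hdv => [hd | [hop hd]].
- have [a [ha hda]] : exists a, inLw tau j a /\ data (at_ tau a) = d.
    case hop: (op (at_ tau (v x))); last by exists (v x).
    by have [//|] := hC n m v1 hn hm hv1 tau htr _ _ (conj hLv hop).
  have hdat : data (at_ t' a) = lam j d.
    by rewrite /t' at_map ?ha.1.1 //= ha.1.2 hda.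
  have hab : a < b.
    apply: (wd_lt hsort (inLw_map lam ha) (inLw_map lam hb)).
    by rewrite hdat hdbt hd; case: hduj => ->.
  by apply: Or33; exists a, b.
- have ha : inLw tau j (v x) by [].
  have hdat : data (at_ t' (v x)) = 1.
    by rewrite /t' at_map ?ha.1.1 //= ha.1.2.
  case: hduj => hde.
  + have hvb : v x = b.
      by apply: (wd_one hsort (inLw_map lam ha) (inLw_map lam hb)); rewrite // hdbt.
    have hed : e = d by rewrite -hdb -hvb.
    case hopu: (op (at_ tau (u j))).
      by apply: Or31.
    have hwu : inLw tau j (u j) by [].
    have hne : u j <> v x by have [] := hdist j x hj hx.
    by case: ((hU j (v x) ha).2 (u j) hwu hne).
  + have hvb : v x < b.
      apply: (wd_lt hsort (inLw_map lam ha) (inLw_map lam hb)).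
      by rewrite hdat hdbt hde.
    by apply: Or33; exists (v x), b.
Qed.

Theorem theorem8p1 (S : memsys) (hC : causality S) (hDI : data_independence S)
  (n m : nat) (hn : 1 <= n) (hm : 1 <= m) (k : nat) (hk : 1 <= k <= minn n m) :
  (exists tau, unambiguous tau /\ is_trace_nm S n m tau /\
               has_canonical_nice_cycle k tau) <->
  (exists tau', is_trace S n m 2 tau' /\
                (forall j, 1 <= j <= m -> Constrain k j tau') /\
                (forall i, 1 <= i <= k -> Check k i tau')).
Proof.
split.
  move=> [tau [hU [htr hcyc]]]; exact: (forward hC hDI hn hm hk hU htr hcyc).
move=> [tau' [htr [hCon hChk]]]; exact: (backward hC hDI hn hm hk htr hCon hChk).
Qed.
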